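(* There is a universal constant $c>0$ such that for all $q\in(0,1/2)$, all $\gamma\in(0,1]$ and $L=\lfloor 1/q^\gamma\rfloor$, with $B=\{\eta\in\Omega_\Lambda:\eta_L=1\}$, $$\frac{c\,q}{C_{\mathbb 10,B}}\le T_{\rm hit}(L)\le\frac{q}{C_{\mathbb 10,B}}.$$
   Context: Fix $q\in(0,1/2)$, $p=1-q$, $\Lambda=\{1,\dots,L\}$, $\Omega_\Lambda=\{0,1\}^\Lambda$, $\pi$ the product measure with $\pi(\sigma_x=1)=p$. The East process has transition rates $K(\sigma,\sigma^x)=c_x(\sigma)[p(1-\sigma_x)+q\sigma_x]$ ($\sigma^x$ = $\sigma$ with spin at $x$ flipped), $c_1\equiv1$, $c_x(\sigma)=1-\sigma_{x-1}$ for $x\ge2$. For disjoint $A,B\subset\Omega_\Lambda$, the capacity is $C_{A,B}=\sum_{a\in A}\pi(a)\mathcal R(a)\mathbb P_a(\tau_A^+>\tau_B)$, where $\mathcal R(a)=\sum_{\sigma\ne a}K(a,\sigma)$, $\tau_B$ is the hitting time of $B$ and $\tau_A^+$ the first return time to $A$ (first time in $A$ after leaving the initial state); $C_{a,B}$ denotes $C_{\{a\},B}$. $\mathbb 10$ has $\sigma_x=1$ for $x<L$, $\sigma_L=0$, and $T_{\rm hit}(L)=\mathbb E_{\mathbb 10}[\tau_{\{\eta_L=1\}}]$. *)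

(* Defs.v *)
From Stdlib Require Import Reals Arith List.
Import ListNotations.
Open Scope R_scope.

(* A configuration on Lambda = {1,..,L}: only values at sites 1..L matter. *)
Definition config := nat -> bool.

Definition sum_sites (L : nat) (f : nat -> R) : R :=
  fold_right Rplus 0 (map f (seq 1 L)).

Definition prod_sites (L : nat) (f : nat -> R) : R :=
  fold_right Rmult 1 (map f (seq 1 L)).

Definition flip (s : config) (x : nat) : config :=
  fun y => if Nat.eqb y x then negb (s y) else s y.

Definition constr (s : config) (x : nat) : R :=
  if Nat.eqb x 1 then 1 else if s (x - 1)%nat then 0 else 1.

Definition rate (q : R) (s : config) (x : nat) : R :=
  constr s x * (if s x then q else 1 - q).

Definition esc (q : R) (L : nat) (s : config) : R :=
  sum_sites L (fun x => rate q s x).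

Definition pi_meas (q : R) (L : nat) (s : config) : R :=
  prod_sites L (fun x => if s x then 1 - q else q).

Definition config_eqb (L : nat) (s t : config) : bool :=
  forallb (fun x => Bool.eqb (s x) (t x)) (seq 1 L).

(* Probability that the (embedded jump chain of the) process started at s
   hits B before A within n jumps (the initial state counts: 1 if s in B,
   else 0 if s in A). Increasing in n; its limit is P_s(tau_B < tau_A). *)
Fixpoint hitB_before_A (q : R) (L : nat) (inA inB : config -> bool)
    (n : nat) (s : config) : R :=
  if inB s then 1 else if inA s then 0 else
  match n with
  | O => 0
  | S m => sum_sites L (fun x =>
             rate q s x / esc q L s * hitB_before_A q L inA inB m (flip s x))
  end.

(* n-step approximation of the capacity C_{a,B}
   = pi(a) R(a) P_a(tau_a^+ > tau_B)
   = pi(a) sum_x K(a,a^x) P_{a^x}(tau_B < tau_a). *)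
Definition cap_seq (q : R) (L : nat) (a : config) (inB : config -> bool)
    (n : nat) : R :=
  pi_meas q L a * sum_sites L (fun x =>
     rate q a x * hitB_before_A q L (config_eqb L a) inB n (flip a x)).

(* Expected (continuous-time) time spent before tau_B during the first n
   jumps; increases to E_s[tau_B]. *)
Fixpoint hit_time_seq (q : R) (L : nat) (inB : config -> bool)
    (n : nat) (s : config) : R :=
  if inB s then 0 else
  match n with
  | O => 0
  | S m => / esc q L s + sum_sites L (fun x =>
             rate q s x / esc q L s * hit_time_seq q L inB m (flip s x))
  end.

Definition one_zero (L : nat) : config := fun y => Nat.ltb y L.

Definition setB (L : nat) : config -> bool := fun s => s L.

(* Main.v *)
Require Import Defs.
From Stdlib Require Import Reals Lra Lia List Arith FunctionalExtensionality Bool.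
Import ListNotations.
Open Scope R_scope.

Definition fsum {A} (l : list A) (f : A -> R) : R := fold_right Rplus 0 (map f l).

Lemma fsum_ext {A} (l : list A) f g : (forall x, In x l -> f x = g x) -> fsum l f = fsum l g.
Proof. induction l; simpl; intros H; auto. unfold fsum in *; simpl. rewrite H by auto. rewrite IHl; auto. Qed.

Lemma fsum_le {A} (l : list A) f g : (forall x, In x l -> f x <= g x) -> fsum l f <= fsum l g.
Proof. induction l; simpl; intros H. unfold fsum; simpl; lra. unfold fsum in *; simpl.
  apply Rplus_le_compat; auto. Qed.

Lemma fsum_plus {A} (l : list A) f g : fsum l (fun x => f x + g x) = fsum l f + fsum l g.
Proof. induction l; unfold fsum in *; simpl; [lra|]. rewrite IHl; lra. Qed.

Lemma fsum_scal {A} (l : list A) c f : fsum l (fun x => c * f x) = c * fsum l f.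
Proof. induction l; unfold fsum in *; simpl; [lra|]. rewrite IHl; lra. Qed.

Lemma fsum_opp {A} (l : list A) f : fsum l (fun x => - f x) = - fsum l f.
Proof. induction l; unfold fsum in *; simpl; [lra|]. rewrite IHl; lra. Qed.

Lemma fsum_nonneg {A} (l : list A) f : (forall x, In x l -> 0 <= f x) -> 0 <= fsum l f.
Proof. intros H. replace 0 with (fsum l (fun _ => 0)). apply fsum_le; auto.
  clear H; induction l; unfold fsum in *; simpl; lra. Qed.

Lemma fsum_ge_term {A} (l : list A) f y : (forall x, In x l -> 0 <= f x) -> In y l -> f y <= fsum l f.
Proof. induction l; simpl; intros H Hy; [contradiction|]. unfold fsum in *; simpl.
  destruct Hy as [<-|Hy].
  - assert (0 <= fold_right Rplus 0 (map f l)) by (apply (fsum_nonneg l f); auto). lra.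
  - assert (f y <= fold_right Rplus 0 (map f l)) by (apply IHl; auto).
    assert (0 <= f a) by auto. lra. Qed.

Lemma fsum_cv {A} (l : list A) (u : nat -> A -> R) (v : A -> R) :
  (forall x, In x l -> Un_cv (fun n => u n x) (v x)) -> Un_cv (fun n => fsum l (u n)) (fsum l v).
Proof. induction l; simpl; intros H.
  - unfold fsum; simpl. intros e He. exists 0%nat. intros. unfold R_dist. rewrite Rminus_diag, Rabs_R0; lra.
  - unfold fsum in *; simpl. apply CV_plus; auto. Qed.

Lemma fsum_app {A} (l1 l2 : list A) f : fsum (l1 ++ l2) f = fsum l1 f + fsum l2 f.
Proof. induction l1; unfold fsum in *; simpl; [lra|]. rewrite IHl1; lra. Qed.

Lemma fsum_flat_map2 {A B} (l : list A) (g1 g2 : A -> B) f :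
  fsum (flat_map (fun c => [g1 c; g2 c]) l) f = fsum l (fun c => f (g1 c) + f (g2 c)).
Proof. induction l; unfold fsum in *; simpl; [lra|]. rewrite IHl; lra. Qed.

Lemma fsum_swap {A B} (l1 : list A) (l2 : list B) (f : A -> B -> R) :
  fsum l1 (fun a => fsum l2 (fun b => f a b)) = fsum l2 (fun b => fsum l1 (fun a => f a b)).
Proof. induction l1; simpl.
  - unfold fsum at 1; simpl. symmetry. transitivity (fsum l2 (fun _ => 0)).
    + apply fsum_ext; intros; reflexivity.
    + clear; induction l2; unfold fsum in *; simpl; lra.
  - unfold fsum at 1; simpl. fold (fsum l1 (fun a => fsum l2 (fun b => f a b))). rewrite IHl1.
    rewrite <- fsum_plus. apply fsum_ext. intros; unfold fsum; simpl; reflexivity. Qed.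

Lemma sum_sites_fsum L f : sum_sites L f = fsum (seq 1 L) f.
Proof. reflexivity. Qed.

Lemma constr_01 s x : constr s x = 0 \/ constr s x = 1.
Proof. unfold constr. destruct (Nat.eqb x 1); auto. destruct (s (x-1)%nat); auto. Qed.

Lemma rate_nonneg q s x : 0 < q < 1/2 -> 0 <= rate q s x.
Proof. intros Hq; unfold rate. destruct (constr_01 s x) as [->| ->]; destruct (s x); lra. Qed.

Lemma rate_le1 q s x : 0 < q < 1/2 -> rate q s x <= 1.
Proof. intros Hq; unfold rate. destruct (constr_01 s x) as [->| ->]; destruct (s x); lra. Qed.

Lemma fsum_const {A} (l : list A) c : fsum l (fun _ => c) = INR (length l) * c.
Proof. induction l; unfold fsum in *; cbn [length map fold_right]. simpl; lra. rewrite IHl. rewrite S_INR. lra. Qed.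

Lemma esc_ge_q q L s : 0 < q < 1/2 -> (1 <= L)%nat -> q <= esc q L s.
Proof. intros Hq HL. unfold esc. rewrite sum_sites_fsum.
  apply Rle_trans with (rate q s 1).
  - unfold rate, constr; simpl. destruct (s 1%nat); lra.
  - apply fsum_ge_term. intros; apply rate_nonneg; auto. apply in_seq; lia. Qed.

Lemma esc_pos q L s : 0 < q < 1/2 -> (1 <= L)%nat -> 0 < esc q L s.
Proof. intros; pose proof (esc_ge_q q L s H H0); lra. Qed.

Lemma esc_le_L q L s : 0 < q < 1/2 -> esc q L s <= INR L.
Proof. intros Hq. unfold esc. rewrite sum_sites_fsum.
  apply Rle_trans with (fsum (seq 1 L) (fun _ => 1)).
  - apply fsum_le; intros; apply rate_le1; auto.
  - rewrite fsum_const, length_seq; lra. Qed.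

Lemma Psum q L s : 0 < q < 1/2 -> (1 <= L)%nat ->
  fsum (seq 1 L) (fun x => rate q s x / esc q L s) = 1.
Proof. intros Hq HL. pose proof (esc_pos q L s Hq HL).
  transitivity (/ esc q L s * esc q L s); [|field; lra].
  set (E := esc q L s). change (fsum (seq 1 L) (fun x => rate q s x / E) = / E * fsum (seq 1 L) (fun x => rate q s x)).
  rewrite <- fsum_scal. apply fsum_ext; intros; unfold Rdiv; ring. Qed.

Lemma Psum_comb q L s (f : nat -> R) : 0 < q < 1/2 -> (1 <= L)%nat ->
  fsum (seq 1 L) (fun x => rate q s x / esc q L s * f x) - f 0%nat =
  fsum (seq 1 L) (fun x => rate q s x / esc q L s * (f x - f 0%nat)).
Proof. intros. rewrite <- (Rmult_1_l (f 0%nat)) at 1. rewrite <- (Psum q L s) by auto.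
  rewrite Rmult_comm, <- fsum_scal. unfold Rminus. rewrite <- fsum_opp, <- fsum_plus.
  apply fsum_ext; intros; ring. Qed.

Lemma P_nonneg q L s x : 0 < q < 1/2 -> (1 <= L)%nat -> 0 <= rate q s x / esc q L s.
Proof. intros. pose proof (esc_pos q L s H H0). pose proof (rate_nonneg q s x H).
  unfold Rdiv; apply Rmult_le_pos; auto. left; apply Rinv_0_lt_compat; auto. Qed.

Lemma P_avg_le q L s f c : 0 < q < 1/2 -> (1 <= L)%nat -> (forall x, In x (seq 1 L) -> f x <= c) ->
  fsum (seq 1 L) (fun x => rate q s x / esc q L s * f x) <= c.
Proof. intros. rewrite <- (Rmult_1_l c). rewrite <- (Psum q L s) by auto.
  rewrite Rmult_comm, <- fsum_scal. apply fsum_le; intros. rewrite (Rmult_comm c).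
  apply Rmult_le_compat_l; auto. apply P_nonneg; auto. Qed.

Lemma P_avg_ge q L s f c : 0 < q < 1/2 -> (1 <= L)%nat -> (forall x, In x (seq 1 L) -> c <= f x) ->
  c <= fsum (seq 1 L) (fun x => rate q s x / esc q L s * f x).
Proof. intros. rewrite <- (Rmult_1_l c). rewrite <- (Psum q L s) by auto.
  rewrite Rmult_comm, <- fsum_scal. apply fsum_le; intros. rewrite (Rmult_comm c).
  apply Rmult_le_compat_l; auto. apply P_nonneg; auto. Qed.

Lemma H_S q L inA inB m s : hitB_before_A q L inA inB (S m) s =
  if inB s then 1 else if inA s then 0 else
  fsum (seq 1 L) (fun x => rate q s x / esc q L s * hitB_before_A q L inA inB m (flip s x)).
Proof. reflexivity. Qed.

Lemma H_0 q L inA inB s : hitB_before_A q L inA inB 0 s = if inB s then 1 else 0.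
Proof. simpl. destruct (inB s); auto. destruct (inA s); auto. Qed.

Lemma H_bounds q L inA inB n s : 0 < q < 1/2 -> (1 <= L)%nat ->
  0 <= hitB_before_A q L inA inB n s <= 1.
Proof. intros Hq HL. revert s; induction n; intros s.
  - rewrite H_0. destruct (inB s); lra.
  - rewrite H_S. destruct (inB s); [lra|]. destruct (inA s); [lra|]. split.
    + apply P_avg_ge; auto. intros; apply IHn.
    + apply P_avg_le; auto. intros; apply IHn. Qed.

Lemma H_mono q L inA inB n s : 0 < q < 1/2 -> (1 <= L)%nat ->
  hitB_before_A q L inA inB n s <= hitB_before_A q L inA inB (S n) s.
Proof. intros Hq HL. revert s; induction n; intros s.
  - rewrite H_S. simpl. destruct (inB s); [lra|]. destruct (inA s); [lra|].
    apply P_avg_ge; auto. intros; destruct (inB (flip s x)); [|destruct (inA (flip s x))]; lra.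
  - rewrite (H_S _ _ _ _ (S n)), H_S. destruct (inB s); [lra|]. destruct (inA s); [lra|].
    apply fsum_le; intros. apply Rmult_le_compat_l; auto. apply P_nonneg; auto. Qed.

Lemma H_mono_le q L inA inB n m s : 0 < q < 1/2 -> (1 <= L)%nat -> (n <= m)%nat ->
  hitB_before_A q L inA inB n s <= hitB_before_A q L inA inB m s.
Proof. intros Hq HL Hnm. induction Hnm; [lra|]. eapply Rle_trans; [apply IHHnm| apply H_mono; auto]. Qed.

Lemma T_S q L inB m s : hit_time_seq q L inB (S m) s =
  if inB s then 0 else
  / esc q L s + fsum (seq 1 L) (fun x => rate q s x / esc q L s * hit_time_seq q L inB m (flip s x)).
Proof. reflexivity. Qed.

Lemma T_0 q L inB s : hit_time_seq q L inB 0 s = 0.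
Proof. simpl. destruct (inB s); auto. Qed.

Lemma T_bounds q L inB n s : 0 < q < 1/2 -> (1 <= L)%nat ->
  0 <= hit_time_seq q L inB n s <= INR n / q.
Proof. intros Hq HL. revert s; induction n; intros s.
  - rewrite T_0. simpl. unfold Rdiv; lra.
  - rewrite T_S. rewrite S_INR. assert (0 <= INR n / q) by (unfold Rdiv; apply Rmult_le_pos; [apply pos_INR|left; apply Rinv_0_lt_compat; lra]).
    assert (0 < / q <= 1 / q). { split. apply Rinv_0_lt_compat; lra. lra. }
    destruct (inB s). { split; [lra|]. unfold Rdiv; rewrite Rmult_plus_distr_r; lra. }
    pose proof (esc_ge_q q L s Hq HL). assert (0 < / esc q L s <= / q).
    { split. apply Rinv_0_lt_compat; lra. apply Rinv_le_contravar; lra. }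
    split.
    + assert (0 <= fsum (seq 1 L) (fun x => rate q s x / esc q L s * hit_time_seq q L inB n (flip s x))).
      { apply P_avg_ge; auto. intros; apply IHn. } lra.
    + assert (fsum (seq 1 L) (fun x => rate q s x / esc q L s * hit_time_seq q L inB n (flip s x)) <= INR n / q).
      { apply P_avg_le; auto. intros; apply IHn. } unfold Rdiv in *. lra. Qed.

Lemma T_mono q L inB n s : 0 < q < 1/2 -> (1 <= L)%nat ->
  hit_time_seq q L inB n s <= hit_time_seq q L inB (S n) s.
Proof. intros Hq HL. revert s; induction n; intros s.
  - rewrite T_0. apply (T_bounds q L inB 1 s); auto.
  - rewrite (T_S _ _ _ (S n)), T_S. destruct (inB s); [lra|].
    apply Rplus_le_compat_l. apply fsum_le; intros. apply Rmult_le_compat_l; auto. apply P_nonneg; auto. Qed.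

Lemma T_mono_le q L inB n m s : 0 < q < 1/2 -> (1 <= L)%nat -> (n <= m)%nat ->
  hit_time_seq q L inB n s <= hit_time_seq q L inB m s.
Proof. intros Hq HL Hnm. induction Hnm; [lra|]. eapply Rle_trans; [apply IHHnm| apply T_mono; auto]. Qed.

Definition Hf q L n s := hitB_before_A q L (fun _ => false) (setB L) n s.
Definition Tf q L n s := hit_time_seq q L (setB L) n s.

Lemma T_inB q L inB n s : inB s = true -> hit_time_seq q L inB n s = 0.
Proof. intros H; destruct n; simpl; rewrite H; auto. Qed.

Lemma decomp q L M m : 0 < q < 1/2 -> (1 <= L)%nat -> (forall s', Tf q L m s' <= M) ->
  forall k s, Tf q L (k + m) s <= Tf q L k s + (1 - Hf q L k s) * M.
Proof. intros Hq HL HM k. induction k; intros s.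
  - unfold Tf, Hf. rewrite T_0, H_0. simpl plus. destruct (setB L s) eqn:E.
    + rewrite T_inB by auto. lra.
    + specialize (HM s). unfold Tf in HM. lra.
  - unfold Tf, Hf in *. simpl plus. rewrite !T_S, H_S. destruct (setB L s); [lra|].
    set (P := fun x => rate q s x / esc q L s).
    apply Rle_trans with (/ esc q L s + fsum (seq 1 L) (fun x => P x * (hit_time_seq q L (setB L) k (flip s x) + (1 - hitB_before_A q L (fun _ => false) (setB L) k (flip s x)) * M))).
    + apply Rplus_le_compat_l. apply fsum_le; intros. apply Rmult_le_compat_l; [apply P_nonneg; auto|]. apply IHk.
    + assert (E : fsum (seq 1 L) (fun x => P x * (hit_time_seq q L (setB L) k (flip s x) + (1 - hitB_before_A q L (fun _ => false) (setB L) k (flip s x)) * M))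
        = fsum (seq 1 L) (fun x => P x * hit_time_seq q L (setB L) k (flip s x)) + M * fsum (seq 1 L) P
          + - M * fsum (seq 1 L) (fun x => P x * hitB_before_A q L (fun _ => false) (setB L) k (flip s x))).
      { rewrite <- !fsum_scal, <- !fsum_plus. apply fsum_ext; intros; ring. }
      rewrite E. unfold P. rewrite Psum by auto. lra. Qed.

Lemma flip_same s x : flip s x x = negb (s x).
Proof. unfold flip. rewrite Nat.eqb_refl. auto. Qed.
Lemma flip_other s x y : y <> x -> flip s x y = s y.
Proof. intros H. unfold flip. apply Nat.eqb_neq in H. rewrite H. auto. Qed.

Lemma H_ge_term q L k s x : 0 < q < 1/2 -> (1 <= L)%nat -> setB L s = false -> (1 <= x <= L)%nat ->
  rate q s x / esc q L s * Hf q L k (flip s x) <= Hf q L (S k) s.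
Proof. intros Hq HL HB Hx. unfold Hf. rewrite H_S, HB.
  apply (fsum_ge_term (seq 1 L) (fun x => rate q s x / esc q L s * hitB_before_A q L (fun _ => false) (setB L) k (flip s x))).
  - intros; apply Rmult_le_pos; [apply P_nonneg; auto| apply H_bounds; auto].
  - apply in_seq; lia. Qed.

Lemma P_ge_eps q L s x : 0 < q < 1/2 -> (1 <= L)%nat -> q <= rate q s x -> q / INR L <= rate q s x / esc q L s.
Proof. intros Hq HL Hr. pose proof (esc_pos q L s Hq HL). pose proof (esc_le_L q L s Hq).
  apply Rle_trans with (q / esc q L s).
  - unfold Rdiv. apply Rmult_le_compat_l; [lra|]. apply Rinv_le_contravar; lra.
  - unfold Rdiv. apply Rmult_le_compat_r; [left; apply Rinv_0_lt_compat|]; lra. Qed.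

Lemma hit_lb q L : 0 < q < 1/2 -> (1 <= L)%nat -> forall m s, (m < L)%nat -> s L = false ->
  constr s (L - m) = 1 -> (q / INR L) ^ (S m) <= Hf q L (S m) s.
Proof. intros Hq HL. assert (HLr : 1 <= INR L) by (apply (le_INR 1); auto).
  set (eps := q / INR L). assert (He : 0 < eps <= 1).
  { unfold eps; split. unfold Rdiv; apply Rmult_lt_0_compat; [lra|apply Rinv_0_lt_compat; lra].
    unfold Rdiv. apply Rle_trans with (q * 1). apply Rmult_le_compat_l. lra.
    rewrite <- Rinv_1. apply Rinv_le_contravar; lra. lra. }
  induction m; intros s Hm HsL Hc.
  - simpl. rewrite Rmult_1_r. apply Rle_trans with (rate q s L / esc q L s * Hf q L 0 (flip s L)).
    + unfold Hf. rewrite H_0. unfold setB. rewrite flip_same, HsL. simpl. rewrite Rmult_1_r.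
      apply P_ge_eps; auto. unfold rate. rewrite Nat.sub_0_r in Hc. rewrite Hc, HsL. lra.
    + apply H_ge_term; auto; try lia.
  - set (x := (L - S m)%nat). assert (Hx : (1 <= x < L)%nat) by (unfold x; lia).
    assert (Hcx : constr s x = 1) by exact Hc.
    assert (Hpre : forall t, t x = false -> constr t (L - m) = 1).
    { intros t Ht. unfold constr. destruct (Nat.eqb_spec (L - m) 1); [lia|].
      replace (L - m - 1)%nat with x by (unfold x; lia). rewrite Ht. auto. }
    destruct (s x) eqn:Esx.
    + set (s' := flip s x).
      assert (IH : eps ^ S m <= Hf q L (S m) s').
      { apply IHm. lia. unfold s'. rewrite flip_other by lia. auto.
        apply Hpre. unfold s'. rewrite flip_same, Esx. auto. }
      apply Rle_trans with (rate q s x / esc q L s * Hf q L (S m) s').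
      * change (eps ^ S (S m)) with (eps * eps ^ S m). apply Rmult_le_compat; [lra|apply pow_le; lra| |auto].
        apply P_ge_eps; auto. unfold rate. rewrite Hcx, Esx. lra.
      * apply H_ge_term; auto; try lia.
    + assert (IH : eps ^ S m <= Hf q L (S m) s) by (apply IHm; auto; lia).
      apply Rle_trans with (eps ^ S m).
      * change (eps ^ S (S m)) with (eps * eps ^ S m). pose proof (pow_le eps (S m)).
        assert (eps * eps ^ S m <= 1 * eps ^ S m) by (apply Rmult_le_compat_r; lra). lra.
      * eapply Rle_trans; [apply IH|]. apply H_mono; auto. Qed.

Lemma T_bounded q L : 0 < q < 1/2 -> (1 <= L)%nat -> exists b, forall n s, Tf q L n s <= b.
Proof. intros Hq HL. assert (HLr : 1 <= INR L) by (apply (le_INR 1); auto).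
  set (eps := q / INR L). assert (He : 0 < eps) by (unfold eps, Rdiv; apply Rmult_lt_0_compat; [lra|apply Rinv_0_lt_compat; lra]).
  assert (HeL : 0 < eps ^ L) by (apply pow_lt; auto).
  set (b := (INR L / q) / eps ^ L).
  assert (Hb0 : 0 <= b). { unfold b, Rdiv. apply Rmult_le_pos; [apply Rmult_le_pos|]; try (left; apply Rinv_0_lt_compat); lra. }
  assert (HN : forall N s, Tf q L (N * L) s <= b).
  { induction N; intros s.
    - simpl. unfold Tf. rewrite T_0. auto.
    - change (S N * L)%nat with (L + N * L)%nat.
      eapply Rle_trans; [apply (decomp q L b (N * L)); auto|].
      assert (H1 : Tf q L L s <= INR L / q) by (apply T_bounds; auto).
      assert (H2 : eps ^ L <= Hf q L L s).
      { destruct L as [|m]; [lia|]. destruct (s (S m)) eqn:Es.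
        - unfold Hf. rewrite H_S. unfold setB; rewrite Es.
          assert (eps ^ S m <= 1). { rewrite <- (pow1 (S m)). apply pow_incr. split; [lra|]. unfold eps, Rdiv. apply Rle_trans with (q * 1); [|lra]. apply Rmult_le_compat_l; [lra|]. rewrite <- Rinv_1. apply Rinv_le_contravar; lra. } lra.
        - apply (hit_lb q (S m) Hq HL m s); auto.
          replace (S m - m)%nat with 1%nat by lia. reflexivity. }
      assert ((1 - Hf q L L s) * b <= (1 - eps ^ L) * b) by (apply Rmult_le_compat_r; lra).
      assert (E : INR L / q + (1 - eps ^ L) * b = b) by (unfold b; field; lra). lra. }
  exists b. intros n s. eapply Rle_trans; [|apply (HN n s)]. apply T_mono_le; auto. nia. Qed.

Definition base0 : config := fun y => Nat.eqb y 0.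
Definition ext (c : config) k b : config := fun y => if Nat.eqb y k then b else c y.
Fixpoint allc (k : nat) : list config :=
  match k with
  | O => [base0]
  | S j => flat_map (fun c => [ext c (S j) false; ext c (S j) true]) (allc j)
  end.

Lemma allc_prop k s : In s (allc k) -> s 0%nat = true /\ forall y, (k < y)%nat -> s y = false.
Proof. revert s; induction k; simpl; intros s Hs.
  - destruct Hs as [<-|[]]. unfold base0; split; auto. intros y Hy. apply Nat.eqb_neq; lia.
  - apply in_flat_map in Hs. destruct Hs as [c [Hc Hs]]. destruct (IHk c Hc) as [H0 H1].
    simpl in Hs. destruct Hs as [<-|[<-|[]]]; unfold ext; split; auto;
    intros y Hy; destruct (Nat.eqb_spec y (S k)); try lia; apply H1; lia. Qed.

Lemma ext_in k c b : In c (allc k) -> In (ext c (S k) b) (allc (S k)).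
Proof. intros H. simpl. apply in_flat_map. exists c. split; auto. destruct b; simpl; auto. Qed.

Lemma flip_invol s x : flip (flip s x) x = s.
Proof. apply functional_extensionality; intros y. unfold flip. destruct (Nat.eqb y x); auto. apply negb_involutive. Qed.

Lemma flip_inv k x F : (1 <= x <= k)%nat ->
  fsum (allc k) (fun s => F (flip s x)) = fsum (allc k) F.
Proof. revert F; induction k; intros F Hx; [lia|]. simpl allc. rewrite !fsum_flat_map2.
  destruct (Nat.eq_dec x (S k)) as [->|Hne].
  - apply fsum_ext; intros c _.
    assert (E1 : flip (ext c (S k) false) (S k) = ext c (S k) true).
    { apply functional_extensionality; intros y; unfold flip, ext. destruct (Nat.eqb y (S k)); auto. }
    assert (E2 : flip (ext c (S k) true) (S k) = ext c (S k) false).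
    { apply functional_extensionality; intros y; unfold flip, ext. destruct (Nat.eqb y (S k)); auto. }
    rewrite E1, E2; lra.
  - assert (E : forall c b, flip (ext c (S k) b) x = ext (flip c x) (S k) b).
    { intros c b; apply functional_extensionality; intros y; unfold flip, ext.
      destruct (Nat.eqb_spec y x); destruct (Nat.eqb_spec y (S k)); auto; lia. }
    transitivity (fsum (allc k) (fun c => (fun c => F (ext c (S k) false) + F (ext c (S k) true)) (flip c x))).
    + apply fsum_ext; intros; rewrite !E; auto.
    + apply (IHk (fun c => F (ext c (S k) false) + F (ext c (S k) true))). lia. Qed.

Definition fprod {A} (l : list A) (f : A -> R) : R := fold_right Rmult 1 (map f l).

Lemma fprod_app {A} (l1 l2 : list A) f : fprod (l1 ++ l2) f = fprod l1 f * fprod l2 f.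
Proof. induction l1; unfold fprod in *; simpl; [lra|]. rewrite IHl1; lra. Qed.

Lemma fprod_ext {A} (l : list A) f g : (forall x, In x l -> f x = g x) -> fprod l f = fprod l g.
Proof. induction l; simpl; intros H; auto. unfold fprod in *; simpl. rewrite H by auto. rewrite IHl; auto. Qed.

Lemma fprod_swap1 f g x : forall len start,
  (forall y, y <> x -> f y = g y) ->
  ((start <= x < start + len)%nat -> fprod (seq start len) g * f x = fprod (seq start len) f * g x) /\
  (~ (start <= x < start + len)%nat -> fprod (seq start len) g = fprod (seq start len) f).
Proof. intros len; induction len; intros start Hfg; simpl.
  - split; intros; [lia|reflexivity].
  - unfold fprod in *; simpl. destruct (IHlen (S start) Hfg) as [IH1 IH2]. split; intros Hx.
    + destruct (Nat.eq_dec x start) as [->|Hne].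
      * rewrite IH2 by lia. lra.
      * rewrite (Hfg start) by auto. rewrite !Rmult_assoc. rewrite IH1 by lia. reflexivity.
    + rewrite (Hfg start) by lia. rewrite IH2 by lia. reflexivity. Qed.

Definition fac q (b : bool) := if b then 1 - q else q.

Lemma pi_fprod q L s : pi_meas q L s = fprod (seq 1 L) (fun x => fac q (s x)).
Proof. reflexivity. Qed.

Lemma detailed_balance q L s x : (1 <= x <= L)%nat ->
  pi_meas q L (flip s x) * rate q (flip s x) x = pi_meas q L s * rate q s x.
Proof. intros Hx. rewrite !pi_fprod.
  destruct (fprod_swap1 (fun y => fac q (s y)) (fun y => fac q (flip s x y)) x L 1) as [H1 _].
  { intros y Hy. unfold flip. apply Nat.eqb_neq in Hy. rewrite Hy. auto. }
  specialize (H1 ltac:(lia)). simpl in H1.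
  assert (Hc : constr (flip s x) x = constr s x).
  { unfold constr. destruct (Nat.eqb x 1); auto. unfold flip.
    destruct (Nat.eqb_spec (x - 1) x); [lia|]. auto. }
  unfold rate. rewrite Hc. unfold fac in H1. rewrite flip_same in *. destruct (s x); simpl in *.
  - replace (fprod (seq 1 L) (fun x0 => fac q (flip s x x0))) with (fprod (seq 1 L) (fun y => if flip s x y then 1 - q else q)) by reflexivity.
    replace (fprod (seq 1 L) (fun x0 => fac q (s x0))) with (fprod (seq 1 L) (fun y => if s y then 1 - q else q)) in * by reflexivity.
    match goal with H1 : ?A * ?u = ?B * ?v |- _ => transitivity ((A*u)*constr s x); [ring| rewrite H1; ring] end.
  - replace (fprod (seq 1 L) (fun x0 => fac q (flip s x x0))) with (fprod (seq 1 L) (fun y => if flip s x y then 1 - q else q)) by reflexivity.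
    replace (fprod (seq 1 L) (fun x0 => fac q (s x0))) with (fprod (seq 1 L) (fun y => if s y then 1 - q else q)) in * by reflexivity.
    match goal with H1 : ?A * ?u = ?B * ?v |- _ => transitivity ((A*u)*constr s x); [ring| rewrite H1; ring] end. Qed.

Definition Lop q L (f : config -> R) s := fsum (seq 1 L) (fun x => rate q s x * (f (flip s x) - f s)).

Lemma green q L f g :
  fsum (allc L) (fun s => pi_meas q L s * g s * Lop q L f s) =
  fsum (allc L) (fun s => pi_meas q L s * f s * Lop q L g s).
Proof.
  set (w := fun s x => pi_meas q L s * rate q s x).
  assert (Split : forall f g s, pi_meas q L s * g s * Lop q L f s =
     fsum (seq 1 L) (fun x => w s x * g s * f (flip s x)) + - fsum (seq 1 L) (fun x => w s x * (g s * f s))).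
  { intros f0 g0 s. unfold Lop. rewrite <- fsum_scal, <- fsum_opp, <- fsum_plus. apply fsum_ext; intros; unfold w; ring. }
  assert (Ksym : forall f g, fsum (allc L) (fun s => fsum (seq 1 L) (fun x => w s x * g s * f (flip s x))) =
                             fsum (allc L) (fun s => fsum (seq 1 L) (fun x => w s x * f s * g (flip s x)))).
  { intros f0 g0. rewrite (fsum_swap (allc L) (seq 1 L) (fun s x => w s x * g0 s * f0 (flip s x))).
    rewrite (fsum_swap (allc L) (seq 1 L) (fun s x => w s x * f0 s * g0 (flip s x))).
    apply fsum_ext; intros x Hx. apply in_seq in Hx.
    rewrite <- (flip_inv L x (fun s => w s x * f0 s * g0 (flip s x))) by lia.
    apply fsum_ext; intros s _. rewrite flip_invol. unfold w. rewrite detailed_balance by lia. ring. }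
  transitivity (fsum (allc L) (fun s => fsum (seq 1 L) (fun x => w s x * g s * f (flip s x))) + - fsum (allc L) (fun s => fsum (seq 1 L) (fun x => w s x * (g s * f s)))).
  { rewrite <- fsum_opp, <- fsum_plus. apply fsum_ext; intros; apply Split. }
  transitivity (fsum (allc L) (fun s => fsum (seq 1 L) (fun x => w s x * f s * g (flip s x))) + - fsum (allc L) (fun s => fsum (seq 1 L) (fun x => w s x * (f s * g s)))).
  { rewrite Ksym. f_equal. f_equal. apply fsum_ext; intros; apply fsum_ext; intros; ring. }
  rewrite <- fsum_opp, <- fsum_plus. apply fsum_ext; intros; symmetry; apply Split. Qed.

Lemma forallb_ext_in {A} (l : list A) f g : (forall x, In x l -> f x = g x) -> forallb f l = forallb g l.
Proof. induction l; simpl; intros H; auto. rewrite H by auto. rewrite IHl; auto. Qed.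

Lemma ceq_ext k c c' b : config_eqb (S k) c (ext c' (S k) b) = config_eqb k c c' && Bool.eqb (c (S k)) b.
Proof. unfold config_eqb. rewrite seq_S, forallb_app. simpl. rewrite andb_true_r.
  f_equal. apply forallb_ext_in. intros y Hy. apply in_seq in Hy. unfold ext.
  destruct (Nat.eqb_spec y (S k)); [lia|auto]. unfold ext. rewrite Nat.eqb_refl. auto. Qed.

Lemma indicator k c (G : config -> R) v :
  (forall s, In s (allc k) -> config_eqb k c s = true -> G s = v) ->
  fsum (allc k) (fun s => if config_eqb k c s then G s else 0) = v.
Proof. revert G; induction k; intros G HG.
  - change (fsum [base0] (fun s => if config_eqb 0 c s then G s else 0) = v). unfold fsum; simpl.
    rewrite (HG base0); simpl; auto; lra.
  - simpl allc. rewrite fsum_flat_map2.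
    transitivity (fsum (allc k) (fun c' => if config_eqb k c c' then G (ext c' (S k) (c (S k))) else 0)).
    + apply fsum_ext; intros c' _. rewrite !ceq_ext. destruct (config_eqb k c c'); simpl; [|lra].
      destruct (c (S k)); simpl; lra.
    + apply IHk. intros s Hs Hc. apply HG. apply ext_in; auto. rewrite ceq_ext, Hc. simpl. apply eqb_reflx. Qed.

Lemma fprod_S f k : fprod (seq 1 (S k)) f = fprod (seq 1 k) f * f (S k).
Proof. rewrite seq_S, fprod_app. unfold fprod at 2; simpl. ring. Qed.

Lemma pi_ext q k c b : pi_meas q k (ext c (S k) b) = pi_meas q k c.
Proof. rewrite !pi_fprod. apply fprod_ext. intros y Hy. apply in_seq in Hy. unfold ext.
  destruct (Nat.eqb_spec y (S k)); [lia|auto]. Qed.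

Lemma pi_S q k s : pi_meas q (S k) s = pi_meas q k s * fac q (s (S k)).
Proof. rewrite !pi_fprod, fprod_S. reflexivity. Qed.

Lemma pi_sum q k : fsum (allc k) (fun s => pi_meas q k s) = 1.
Proof. induction k.
  - unfold fsum, pi_meas, prod_sites; simpl; ring.
  - simpl allc. rewrite fsum_flat_map2. rewrite <- IHk. apply fsum_ext; intros c _.
    rewrite !pi_S, !pi_ext. unfold ext, fac. rewrite Nat.eqb_refl. ring. Qed.

Lemma pi_sum_notB q k : fsum (allc (S k)) (fun s => if s (S k) then 0 else pi_meas q (S k) s) = q.
Proof. simpl allc. rewrite fsum_flat_map2.
  transitivity (fsum (allc k) (fun s => q * pi_meas q k s)).
  - apply fsum_ext; intros c _. rewrite !pi_S, !pi_ext. unfold ext, fac. rewrite Nat.eqb_refl. ring.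
  - rewrite fsum_scal, pi_sum. ring. Qed.

Lemma cv_S u l : Un_cv u l -> Un_cv (fun n => u (S n)) l.
Proof. intros H e He. destruct (H e He) as [N HN]. exists N. intros n Hn. apply HN. lia. Qed.

Lemma cv_const c : Un_cv (fun _ => c) c.
Proof. intros e He. exists 0%nat. intros. unfold R_dist. rewrite Rminus_diag, Rabs_R0; lra. Qed.

Lemma cv_bounds u l a b : Un_cv u l -> (forall n, a <= u n <= b) -> a <= l <= b.
Proof. intros H Hb. split.
  - destruct (Rle_or_lt a l) as [|Hl]; auto. destruct (H (a - l)) as [N HN]; [lra|].
    specialize (HN N (le_n N)). specialize (Hb N). unfold R_dist in HN.
    apply Rabs_def2 in HN. lra.
  - destruct (Rle_or_lt l b) as [|Hl]; auto. destruct (H (l - b)) as [N HN]; [lra|].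
    specialize (HN N (le_n N)). specialize (Hb N). unfold R_dist in HN.
    apply Rabs_def2 in HN. lra. Qed.

Lemma mono_cv (u : config -> nat -> R) b :
  (forall s n, u s n <= u s (S n)) -> (forall s n, u s n <= b) ->
  exists F : config -> R, forall s, Un_cv (u s) (F s).
Proof. intros Hm Hb.
  assert (G : forall s, {l | Un_cv (u s) l}).
  { intros s. apply growing_cv. intros n; apply Hm. exists b. intros x [i ->]. apply Hb. }
  exists (fun s => proj1_sig (G s)). intros s. apply proj2_sig. Qed.

Lemma Lop_P q L f s : 0 < q < 1/2 -> (1 <= L)%nat ->
  Lop q L f s = esc q L s * (fsum (seq 1 L) (fun x => rate q s x / esc q L s * f (flip s x)) - f s).
Proof. intros Hq HL. pose proof (esc_pos q L s Hq HL).
  assert (E1 : Lop q L f s = fsum (seq 1 L) (fun x => rate q s x * f (flip s x)) + - (esc q L s * f s)).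
  { unfold Lop. rewrite Rmult_comm. unfold esc. rewrite sum_sites_fsum, <- fsum_scal, <- fsum_opp, <- fsum_plus.
    apply fsum_ext; intros; ring. }
  assert (E2 : fsum (seq 1 L) (fun x => rate q s x / esc q L s * f (flip s x)) = / esc q L s * fsum (seq 1 L) (fun x => rate q s x * f (flip s x))).
  { rewrite <- fsum_scal. apply fsum_ext; intros; unfold Rdiv; ring. }
  rewrite E1, E2. field. lra. Qed.

Lemma pi_nonneg q L s : 0 < q < 1/2 -> 0 < pi_meas q L s.
Proof. intros Hq. rewrite pi_fprod. unfold fprod. induction (seq 1 L); simpl; [lra|].
  apply Rmult_lt_0_compat; auto. unfold fac; destruct (s a); lra. Qed.

Lemma ceq_refl L s : config_eqb L s s = true.
Proof. unfold config_eqb. apply forallb_forall. intros; apply eqb_reflx. Qed.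

Lemma ceq_spec L s t y : config_eqb L s t = true -> (1 <= y <= L)%nat -> s y = t y.
Proof. unfold config_eqb. intros H Hy. rewrite forallb_forall in H. apply eqb_prop. apply H. apply in_seq; lia. Qed.

Lemma ceq_a L s : (1 <= L)%nat -> In s (allc L) -> config_eqb L (one_zero L) s = true -> s = one_zero L.
Proof. intros HL Hs Hc. destruct (allc_prop L s Hs) as [H0 H1]. apply functional_extensionality; intros y.
  destruct (Nat.eq_dec y 0) as [->|Hy0]. { rewrite H0. unfold one_zero. symmetry; apply Nat.ltb_lt; lia. }
  destruct (le_lt_dec y L) as [Hy|Hy].
  - symmetry. apply (ceq_spec L); auto; lia.
  - rewrite H1 by auto. unfold one_zero. symmetry; apply Nat.ltb_ge; lia. Qed.

Lemma fprod_const {A} (l : list A) c : fprod l (fun _ => c) = c ^ length l.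
Proof. induction l; unfold fprod in *; simpl; auto. rewrite IHl; auto. Qed.

Lemma pi_a q m : pi_meas q (S m) (one_zero (S m)) = (1 - q) ^ m * q.
Proof. rewrite pi_S. replace (fac q (one_zero (S m) (S m))) with q by (unfold fac, one_zero; rewrite Nat.ltb_irrefl; auto).
  f_equal. rewrite pi_fprod. rewrite <- (length_seq m 1) at 2. rewrite <- fprod_const.
  apply fprod_ext. intros y Hy. apply in_seq in Hy. unfold fac, one_zero.
  replace (Nat.ltb y (S m)) with true; auto. symmetry; apply Nat.ltb_lt; lia. Qed.

Lemma exp_pow_nat x m : exp x ^ m = exp (INR m * x).
Proof. induction m; simpl. rewrite Rmult_0_l, exp_0; auto. rewrite IHm.
  rewrite <- exp_plus. f_equal. destruct m; simpl; ring. Qed.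

Lemma bound19 q m : 0 < q < 1/2 -> INR m * q <= 1 -> 1/9 <= (1 - q) ^ m.
Proof. intros Hq Hm.
  assert (A1 : 1 <= ((1 - q) * (1 + 2 * q)) ^ m).
  { apply Rle_trans with (1 ^ m); [rewrite pow1; lra|]. apply pow_incr. assert (0 <= q*(1-2*q)) by (apply Rmult_le_pos; lra). split; [lra|]. nra. }
  rewrite Rpow_mult_distr in A1.
  assert (A2 : (1 + 2*q) ^ m <= exp (2*q) ^ m).
  { apply pow_incr. split; [lra|]. left. apply exp_ineq1. lra. }
  rewrite exp_pow_nat in A2.
  assert (A3 : exp (INR m * (2 * q)) <= exp 2).
  { destruct (Rle_lt_or_eq_dec (INR m * (2 * q)) 2) as [Hl|He]. nra. left; apply exp_increasing; auto. rewrite He; lra. }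
  assert (A4 : exp 2 <= 9). { replace 2 with (1 + 1) by ring. rewrite exp_plus. pose proof exp_le_3. pose proof (exp_pos 1). nra. }
  assert (A5 : 0 < (1 + 2*q) ^ m) by (apply pow_lt; lra).
  assert (A6 : 0 <= (1 - q) ^ m) by (apply pow_le; lra).
  nra. Qed.

Lemma L_facts q gamma L : 0 < q < 1/2 -> 0 < gamma <= 1 -> INR L <= / Rpower q gamma < INR L + 1 ->
  (1 <= L)%nat /\ INR L * q <= 1.
Proof. intros Hq Hg HL. assert (Hln : ln q < 0) by (rewrite <- ln_1; apply ln_increasing; lra).
  set (P := Rpower q gamma) in *. assert (HP : 0 < P < 1).
  { unfold P, Rpower. split. apply exp_pos. rewrite <- exp_0. apply exp_increasing. assert (0 < gamma * - ln q) by (apply Rmult_lt_0_compat; lra). lra. }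
  assert (HPq : q <= P).
  { unfold P, Rpower. rewrite <- (exp_ln q) at 1 by lra.
    destruct (Rle_lt_or_eq_dec (ln q) (gamma * ln q)) as [H|H]; [nra| |].
    left; apply exp_increasing; auto. right; f_equal; exact H. }
  split.
  - assert (1 < / P). { rewrite <- Rinv_1. apply Rinv_lt_contravar; lra. }
    assert (0 < INR L) by lra. destruct L; [change (INR 0) with 0 in *; lra|lia].
  - assert (/ P <= / q) by (apply Rinv_le_contravar; lra).
    assert (INR L <= / q) by lra.
    apply Rmult_le_compat_r with (r := q) in H0; [|lra]. rewrite Rinv_l in H0; lra. Qed.

Theorem mainTheorem16 :
  exists c : R, 0 < c /\
  forall (q gamma : R), 0 < q < 1/2 -> 0 < gamma <= 1 ->
  forall L : nat, INR L <= / Rpower q gamma < INR L + 1 ->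
  exists T C : R,
    Un_cv (fun n => hit_time_seq q L (setB L) n (one_zero L)) T /\
    Un_cv (fun n => cap_seq q L (one_zero L) (setB L) n) C /\
    c * q / C <= T <= q / C.
Proof.
  exists (1/9). split; [lra|]. intros q gamma Hq Hg L HL.
  destruct (L_facts q gamma L Hq Hg HL) as [HL1 HLq]. clear HL Hg.
  set (a := one_zero L). set (A := config_eqb L a). set (B := setB L).
  destruct (T_bounded q L Hq HL1) as [b Hb].
  destruct (mono_cv (fun s n => Tf q L n s) b) as [T HT].
  { intros; apply T_mono; auto. } { intros; apply Hb. }
  destruct (mono_cv (fun s n => hitB_before_A q L A B n s) 1) as [h Hh].
  { intros; apply H_mono; auto. } { intros; apply H_bounds; auto. }
  simpl in HT, Hh.
  assert (ET : forall s, T s = if B s then 0 else / esc q L s + fsum (seq 1 L) (fun x => rate q s x / esc q L s * T (flip s x))).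
  { intros s. apply (UL_sequence (fun n => Tf q L (S n) s)). apply (cv_S (fun n => Tf q L n s)); apply HT.
    unfold Tf. change (fun n => hit_time_seq q L (setB L) (S n) s) with
      (fun n => if B s then 0 else / esc q L s + fsum (seq 1 L) (fun x => rate q s x / esc q L s * hit_time_seq q L (setB L) n (flip s x))).
    destruct (B s). apply cv_const. apply CV_plus. apply cv_const.
    apply fsum_cv. intros x _. apply CV_mult. apply cv_const. apply HT. }
  assert (Eh : forall s, h s = if B s then 1 else if A s then 0 else fsum (seq 1 L) (fun x => rate q s x / esc q L s * h (flip s x))).
  { intros s. apply (UL_sequence (fun n => hitB_before_A q L A B (S n) s)). apply (cv_S (fun n => hitB_before_A q L A B n s)); apply Hh.
    change (fun n => hitB_before_A q L A B (S n) s) with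
      (fun n => if B s then 1 else if A s then 0 else fsum (seq 1 L) (fun x => rate q s x / esc q L s * hitB_before_A q L A B n (flip s x))).
    destruct (B s). apply cv_const. destruct (A s). apply cv_const.
    apply fsum_cv. intros x _. apply CV_mult. apply cv_const. apply Hh. }
  assert (hb : forall s, 0 <= h s <= 1).
  { intros s. apply (cv_bounds _ _ 0 1 (Hh s)). intros; apply H_bounds; auto. }
  assert (Tb : forall s, 0 <= T s).
  { intros s. apply (cv_bounds _ _ 0 b (HT s)). intros n. split; [apply T_bounds; auto|apply Hb]. }

  assert (HBa : B a = false) by (unfold B, setB, a, one_zero; apply Nat.ltb_irrefl).
  assert (ha : h a = 0) by (rewrite Eh, HBa; unfold A; rewrite ceq_refl; auto).
  set (phi := fun s => 1 - h s).
  set (K := fsum (seq 1 L) (fun x => rate q a x * h (flip a x))).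
  set (Ssum := fsum (allc L) (fun s => if s L then 0 else pi_meas q L s * phi s)).
  assert (LT : forall s, B s = false -> Lop q L T s = -1).
  { intros s HsB. rewrite Lop_P by auto. rewrite (ET s). rewrite HsB.
    pose proof (esc_pos q L s Hq HL1). field. lra. }
  assert (Lphi : forall s, Lop q L phi s = - Lop q L h s).
  { intros s. unfold Lop. rewrite <- fsum_opp. apply fsum_ext; intros; unfold phi; ring. }
  assert (GL : fsum (allc L) (fun s => pi_meas q L s * phi s * Lop q L T s) = - Ssum).
  { unfold Ssum. rewrite <- fsum_opp. apply fsum_ext; intros s _. destruct (s L) eqn:EsL.
    - assert (h s = 1) by (rewrite Eh; unfold B, setB; rewrite EsL; auto). unfold phi. rewrite H. ring.
    - rewrite LT by (unfold B, setB; auto). ring. }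
  assert (GR : fsum (allc L) (fun s => pi_meas q L s * T s * Lop q L phi s) = - (pi_meas q L a * T a * K)).
  { transitivity (- fsum (allc L) (fun s => if A s then pi_meas q L a * T a * K else 0)).
    - rewrite <- fsum_opp. apply fsum_ext; intros s Hs. destruct (A s) eqn:EA.
      + assert (s = a) by (apply ceq_a; auto). subst s. rewrite Lphi. unfold Lop, K. rewrite ha.
        replace (fsum (seq 1 L) (fun x => rate q a x * (h (flip a x) - 0))) with (fsum (seq 1 L) (fun x => rate q a x * h (flip a x))) by (apply fsum_ext; intros; ring). ring.
      + destruct (B s) eqn:EB.
        * rewrite ET, EB. ring.
        * rewrite Lphi. rewrite Lop_P by auto. rewrite (Eh s). rewrite EB, EA. ring.
    - f_equal. apply indicator. auto. }
  pose proof (green q L T phi) as G. rewrite GL, GR in G.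
  assert (SE : Ssum = pi_meas q L a * K * T a) by lra. clear G GL GR.
  assert (HC : Un_cv (fun n => cap_seq q L a B n) (pi_meas q L a * K)).
  { unfold cap_seq. apply CV_mult. apply cv_const. unfold K.
    apply (fsum_cv (seq 1 L) (fun n x => rate q a x * hitB_before_A q L (config_eqb L a) B n (flip a x))).
    intros x _. apply CV_mult. apply cv_const. apply Hh. }
  assert (K0 : 0 <= K).
  { unfold K. apply fsum_nonneg. intros; apply Rmult_le_pos; [apply rate_nonneg; auto| apply hb]. }
  destruct L as [|m]; [lia|].
  assert (Sq : Ssum <= q).
  { rewrite <- (pi_sum_notB q m). unfold Ssum. apply fsum_le. intros s _. destruct (s (S m)); [lra|].
    pose proof (pi_nonneg q (S m) s Hq). unfold phi. pose proof (hb s). nra. }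
  assert (Sa : pi_meas q (S m) a <= Ssum).
  { apply Rle_trans with (fsum (allc (S m)) (fun s => if A s then pi_meas q (S m) a else 0)).
    - unfold A. rewrite (indicator (S m) a (fun _ => pi_meas q (S m) a) (pi_meas q (S m) a)); [lra|auto].
    - unfold Ssum. apply fsum_le. intros s Hs. destruct (A s) eqn:EA.
      + assert (s = a) by (apply ceq_a; auto). subst s. unfold B, setB in HBa. rewrite HBa.
        unfold phi; rewrite ha. lra.
      + destruct (s (S m)); [lra|]. pose proof (pi_nonneg q (S m) s Hq). unfold phi. pose proof (hb s). nra. }
  assert (Pa : q / 9 <= pi_meas q (S m) a).
  { unfold a. rewrite pi_a. assert (1/9 <= (1-q)^m). { apply bound19; auto. rewrite S_INR in HLq. nra. } nra. }
  set (C := pi_meas q (S m) a * K).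
  assert (Ta0 : 0 <= T a) by apply Tb.
  assert (C0 : 0 < C).
  { unfold C. pose proof (pi_nonneg q (S m) a Hq). destruct K0 as [K0|K0]. nra.
    rewrite <- K0 in SE. lra. }
  assert (TaE : T a = Ssum * / C). { rewrite SE. replace (pi_meas q (S m) a * K) with C by reflexivity. field. lra. }
  exists (T a), C. split; [|split].
  - apply HT.
  - apply HC.
  - rewrite TaE. unfold Rdiv. assert (0 < / C) by (apply Rinv_0_lt_compat; auto). split.
    + apply Rmult_le_compat_r; lra.
    + apply Rmult_le_compat_r; lra.
Qed.
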